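(* Let $\nu>0$ be known, let $w_1,\ldots,w_n\in(0,1)$ be observations from the unit-log-Student-$t$ distribution, and let $$\ell(\sigma_\rho)=-n\log\sigma_\rho-\sum_{i=1}^n\log[w_i(1-w_i)]+\sum_{i=1}^n\log f_\nu\!\left(\frac{1}{\sigma_\rho}\log\frac{w_i}{1-w_i}\right),\qquad \sigma_\rho>0,$$ be the log-likelihood, where $f_\nu$ is the Student-$t$ PDF with $\nu$ degrees of freedom. Suppose $\widehat\sigma_\rho>0$ is an ML estimate in the loose sense, i.e. a solution of $\partial\ell/\partial\sigma_\rho=0$, equivalently $$\frac{\nu+1}{n}\sum_{i=1}^n\frac{\log^2\big(\frac{w_i}{1-w_i}\big)}{\nu\widehat\sigma_\rho^2+\log^2\big(\frac{w_i}{1-w_i}\big)}=1.$$ Then $\widehat\sigma_\rho$ is an ML estimate in the strict sense, i.e. $\ell$ attains its absolute maximum over $(0,\infty)$ at $\widehat\sigma_\rho$ (in particular $\partial^2\ell/\partial\sigma_\rho^2(\widehat\sigma_\rho)<0$).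
   Context: The unit-log-Student-$t$ distribution has PDF $f_W(w;\sigma_\rho)=\frac{1}{w(1-w)\sigma_\rho}f_\nu\big(\frac{1}{\sigma_\rho}\log\frac{w}{1-w}\big)$ on $(0,1)$, $\sigma_\rho>0$. *)

(* Defs.v *)
From Stdlib Require Import Reals Lra.
From Coquelicot Require Import Coquelicot.
Open Scope R_scope.

Fixpoint fsum (n : nat) (f : nat -> R) : R :=
  match n with
  | O => 0
  | S m => fsum m f + f m
  end.

Definition Gamma (a : R) : R :=
  RInt_gen (fun t => Rpower t (a - 1) * exp (- t)) (at_right 0) (Rbar_locally p_infty).

Definition student_t_pdf (nu x : R) : R :=
  Gamma ((nu + 1) / 2) / (sqrt (nu * PI) * Gamma (nu / 2))
  * Rpower (1 + x ^ 2 / nu) (- ((nu + 1) / 2)).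

Definition loglik (nu : R) (n : nat) (w : nat -> R) (s : R) : R :=
  - INR n * ln s
  - fsum n (fun i => ln (w i * (1 - w i)))
  + fsum n (fun i => ln (student_t_pdf nu (/ s * ln (w i / (1 - w i))))).

(* Main.v *)
Require Import Defs.
From Stdlib Require Import Reals Lra Lia Classical.
From Coquelicot Require Import Coquelicot.
Open Scope R_scope.

Lemma fsum_ext n f g : (forall i, (i < n)%nat -> f i = g i) -> fsum n f = fsum n g.
Proof. induction n; simpl; intros H; auto. rewrite IHn by (intros; apply H; lia). rewrite H; auto. Qed.

Lemma fsum_plus n f g : fsum n (fun i => f i + g i) = fsum n f + fsum n g.
Proof. induction n; simpl; [lra|]. rewrite IHn; lra. Qed.

Lemma fsum_scal n c f : fsum n (fun i => c * f i) = c * fsum n f.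
Proof. induction n; simpl; [lra|]. rewrite IHn; lra. Qed.

Lemma fsum_le n f g : (forall i, (i < n)%nat -> f i <= g i) -> fsum n f <= fsum n g.
Proof. induction n; simpl; intros H; [lra|].
  assert (fsum n f <= fsum n g) by (apply IHn; intros; apply H; lia).
  assert (f n <= g n) by (apply H; lia). lra. Qed.

Lemma fsum_neg n f : (forall i, (i < n)%nat -> f i <= 0) -> (exists i, (i < n)%nat /\ f i < 0) -> fsum n f < 0.
Proof. induction n; simpl; intros H [i [Hi Hf]]; [lia|].
  assert (fsum n f <= fsum n (fun _ => 0)) by (apply fsum_le; intros; apply H; lia).
  assert (fsum n (fun _ => 0) = 0) by (clear; induction n; simpl; lra).
  destruct (Nat.eq_dec i n).
  - subst. lra.
  - assert (fsum n f < 0) by (apply IHn; [intros; apply H; lia| exists i; split; [lia|auto]]).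
    assert (f n <= 0) by (apply H; lia). lra. Qed.

Lemma is_derive_fsum n (f : nat -> R -> R) df x :
  (forall i, (i < n)%nat -> is_derive (f i) x (df i)) ->
  is_derive (fun s => fsum n (fun i => f i s)) x (fsum n df).
Proof. induction n; simpl; intros H.
  - apply (is_derive_const 0).
  - apply (is_derive_plus (fun s => fsum n (fun i => f i s)) (f n)).
    + apply IHn; intros; apply H; lia.
    + apply H; lia. Qed.

Lemma ln_le_m1 y : 0 < y -> ln y <= y - 1.
Proof. intros. pose proof (exp_ineq1_le (ln y)). rewrite exp_ln in H0; lra. Qed.

Lemma ln_concave p r : 0 <= p <= 1 -> 0 < r -> p * ln r <= ln (p * r + (1 - p)).
Proof. intros Hp Hr. set (m := p * r + (1 - p)).
  assert (Hm : 0 < m) by (unfold m; nra).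
  pose proof (ln_le_m1 (r / m)) as H1. pose proof (ln_le_m1 (1 / m)) as H2.
  rewrite ln_div in H1 by lra. rewrite ln_div in H2 by lra. rewrite ln_1 in H2.
  assert (p * (r/m - 1) + (1-p) * (1/m - 1) = 0) by (unfold m in *; field; lra).
  assert (0 < r/m) by (apply Rdiv_lt_0_compat; lra).
  assert (0 < 1/m) by (apply Rdiv_lt_0_compat; lra).
  specialize (H1 H0). specialize (H2 H3). nra. Qed.

Lemma dterm nu y s : 0 < nu -> 0 < s ->
  is_derive (fun s => ln (1 + (/s*y)^2/nu)) s (-2 * y^2/(s*(nu*s^2+y^2))).
Proof. intros. auto_derive.
  - split; [lra|split; auto]. assert (0 <= / s * y * (/ s * y * 1) * / nu).
    { apply Rmult_le_pos. replace (/ s * y * (/ s * y * 1)) with ((/s*y)^2) by ring. apply pow2_ge_0. left; apply Rinv_0_lt_compat; lra. } lra.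
  - assert (0 <= y^2) by apply pow2_ge_0. assert (0 < nu * s^2) by (apply Rmult_lt_0_compat; [lra|apply pow_lt; lra]).
    field. repeat split; try lra. 
Qed.

Lemma term_bound nu y s h : 0 < nu -> 0 < s -> 0 < h ->
  -2*(y^2/(nu*h^2+y^2))*(ln s - ln h) <=
  ln (1 + (/s*y)^2/nu) - ln (1 + (/h*y)^2/nu).
Proof. intros Hnu Hs Hh.
  assert (E: forall t, 0 < t -> ln (1 + (/t*y)^2/nu) = ln (nu*t^2+y^2) - ln nu - 2 * ln t).
  { intros t Ht. replace (1 + (/t*y)^2/nu) with ((nu*t^2+y^2)/(nu*(t*t))) by (field; lra).
    assert (0 <= y^2) by apply pow2_ge_0.
    assert (0 < t*t) by (apply Rmult_lt_0_compat; lra).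
    assert (0 < nu*(t*t)) by (apply Rmult_lt_0_compat; lra).
    assert (0 < nu*t^2) by (simpl; rewrite Rmult_1_r; lra).
    rewrite ln_div, !ln_mult by lra. lra. }
  rewrite !E by lra.
  set (p := nu*h^2/(nu*h^2+y^2)).
  assert (0 <= y^2) by apply pow2_ge_0. assert (0 < nu*h^2) by (apply Rmult_lt_0_compat; [lra|apply pow_lt; lra]).
  assert (Hp: 0 <= p <= 1).
  { assert (0 <= y^2/(nu*h^2+y^2)) by (apply Rdiv_le_0_compat; lra).
    assert (0 <= p) by (unfold p; apply Rdiv_le_0_compat; lra).
    assert (p = 1 - y^2/(nu*h^2+y^2)) by (unfold p; field; lra). lra. }
  pose proof (ln_concave p (s^2/h^2) Hp) as C.
  assert (0 < s^2) by (apply pow_lt; lra). assert (0 < h^2) by (apply pow_lt; lra).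
  assert (0 < nu*s^2) by (apply Rmult_lt_0_compat; lra).
  assert (0 < s*s) by (apply Rmult_lt_0_compat; lra).
  assert (0 < h*h) by (apply Rmult_lt_0_compat; lra).
  assert (0 < s^2/h^2) by (apply Rdiv_lt_0_compat; lra).
  specialize (C H6).
  replace (p * (s^2/h^2) + (1-p)) with ((nu*s^2+y^2)/(nu*h^2+y^2)) in C
    by (unfold p; field; lra).
  rewrite !ln_div in C by (simpl; lra). simpl in C. rewrite !Rmult_1_r in C. rewrite !ln_mult in C by lra.
  assert (y^2/(nu*h^2+y^2) = 1 - p) by (unfold p; field; lra).
  rewrite H7. simpl. rewrite !Rmult_1_r. lra.
Qed.

Lemma fsum_minus n f g : fsum n (fun i => f i - g i) = fsum n f - fsum n g.
Proof. induction n; simpl; [lra|]. rewrite IHn; lra. Qed.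

Lemma fsum_zero n : fsum n (fun _ => 0) = 0.
Proof. induction n; simpl; lra. Qed.

Lemma ln_nonpos x : x <= 0 -> ln x = 0.
Proof. intros. unfold ln. destruct (Rlt_dec 0 x). exfalso; lra. reflexivity. Qed.

Lemma dterm2 nu y c s : 0 < nu -> 0 < s ->
  is_derive (fun s => c - (nu+1)/2 * ln (1 + (/s*y)^2/nu)) s ((nu+1)*y^2/(s*(nu*s^2+y^2))).
Proof. intros Hnu Hs.
  assert (H := dterm nu y s Hnu Hs).
  assert (H2 := is_derive_minus _ _ s _ _ (is_derive_const c s) (is_derive_scal _ s ((nu+1)/2) _ H)).
  assert (0 <= y^2) by apply pow2_ge_0.
  assert (0 < nu * s^2) by (apply Rmult_lt_0_compat; [lra|apply pow_lt; lra]).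
  replace ((nu+1)*y^2/(s*(nu*s^2+y^2))) with (minus 0 (scal ((nu+1)/2) (-2 * y^2/(s*(nu*s^2+y^2))))).
  exact H2.
  unfold minus, plus, opp, scal; simpl. unfold mult; simpl. field. lra.
Qed.

Lemma dterm3 nu y s : 0 < nu -> 0 < s ->
  is_derive (fun s => (nu+1)*y^2/(s*(nu*s^2+y^2))) s
     (-(nu+1)*y^2*(3*nu*s^2+y^2)/(s*(nu*s^2+y^2))^2).
Proof. intros Hnu Hs.
  assert (0 <= y^2) by apply pow2_ge_0.
  assert (0 < nu * s^2) by (apply Rmult_lt_0_compat; [lra|apply pow_lt; lra]).
  assert (0 < s*(nu*s^2+y^2)) by (apply Rmult_lt_0_compat; lra).
  auto_derive. lra. field. split; lra.
Qed.

Lemma key_eq nu a h : 0 < nu -> 0 <= a -> 0 < h ->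
  / (h^2) * ((nu+1)*(a/(nu*h^2+a))) + -(nu+1)*a*(3*nu*h^2+a)/(h*(nu*h^2+a))^2
  = -(2*nu*(nu+1)*a) * /((nu*h^2+a)^2).
Proof. intros. assert (0 < nu*h^2) by (apply Rmult_lt_0_compat; [lra|apply pow_lt; lra]).
  field. split; lra. Qed.

Lemma key_le nu a h : 0 < nu -> 0 <= a -> 0 < h -> -(2*nu*(nu+1)*a) * /((nu*h^2+a)^2) <= 0.
Proof. intros. assert (0 < nu*h^2) by (apply Rmult_lt_0_compat; [lra|apply pow_lt; lra]).
  assert (0 < /((nu*h^2+a)^2)) by (apply Rinv_0_lt_compat, pow_lt; lra).
  assert (0 <= 2*nu*(nu+1)*a) by (apply Rmult_le_pos; [apply Rmult_le_pos|]; lra).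
  nra. Qed.

Lemma key_lt nu a h : 0 < nu -> 0 < a -> 0 < h -> -(2*nu*(nu+1)*a) * /((nu*h^2+a)^2) < 0.
Proof. intros. assert (0 < nu*h^2) by (apply Rmult_lt_0_compat; [lra|apply pow_lt; lra]).
  assert (0 < /((nu*h^2+a)^2)) by (apply Rinv_0_lt_compat, pow_lt; lra).
  assert (0 < 2*nu*(nu+1)*a) by (apply Rmult_lt_0_compat; [apply Rmult_lt_0_compat|]; lra).
  nra. Qed.

Theorem proposition5 (nu : R) (n : nat) (w : nat -> R) (shat : R) :
  0 < nu ->
  (0 < n)%nat ->
  (forall i, (i < n)%nat -> 0 < w i < 1) ->
  0 < shat ->
  is_derive (loglik nu n w) shat 0 ->
  (forall s, 0 < s -> loglik nu n w s <= loglik nu n w shat) /\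
  Derive (Derive (loglik nu n w)) shat < 0.
Proof.
  intros Hnu Hn Hw Hh Hd.
  set (y := fun i => ln (w i / (1 - w i))).
  set (C := Gamma ((nu + 1) / 2) / (sqrt (nu * PI) * Gamma (nu / 2))).
  set (K := fsum n (fun i => ln (w i * (1 - w i)))).
  assert (Hpdf: forall x, student_t_pdf nu x = C * Rpower (1 + x^2/nu) (-((nu+1)/2))) by reflexivity.
  assert (HnR: 0 < INR n) by (apply lt_0_INR; lia).
  destruct (Rle_lt_dec C 0) as [HC|HC].
  - exfalso.
    assert (E: forall s, loglik nu n w s = - INR n * ln s - K).
    { intros s. unfold loglik. fold K.
      rewrite (fsum_ext _ _ (fun _ => 0)). rewrite fsum_zero. ring.
      intros i _. apply ln_nonpos. rewrite Hpdf.
      assert (0 < Rpower (1 + (/ s * ln (w i / (1 - w i))) ^ 2 / nu) (- ((nu + 1) / 2))) by (unfold Rpower; apply exp_pos).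
      nra. }
    apply (is_derive_ext _ _ _ _ E) in Hd.
    assert (Hd2: is_derive (fun s => - INR n * ln s - K) shat (- INR n / shat)) by (auto_derive; [lra| field; lra]).
    apply is_derive_unique in Hd. apply is_derive_unique in Hd2.
    assert (Z: - INR n / shat = 0) by (rewrite <- Hd2; exact Hd).
    assert (0 < INR n / shat) by (apply Rdiv_lt_0_compat; lra).
    unfold Rdiv in *. lra.
  - set (F := fun s => - INR n * ln s - K + fsum n (fun i => ln C - (nu+1)/2 * ln (1 + (/s * y i)^2/nu))).
    assert (E: forall s, loglik nu n w s = F s).
    { intros s. unfold loglik, F. fold K. f_equal. apply fsum_ext. intros i _.
      rewrite Hpdf, ln_mult, ln_Rpower. unfold y. ring. lra. unfold Rpower; apply exp_pos. }
    set (D := fun s => - INR n / s + fsum n (fun i => (nu+1)*(y i)^2/(s*(nu*s^2+(y i)^2)))).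
    assert (HD: forall s, 0 < s -> is_derive F s (D s)).
    { intros s Hs.
      assert (H1: is_derive (fun s => -INR n*ln s - K) s (-INR n / s)) by (auto_derive; [lra| field; lra]).
      assert (H2: is_derive (fun s => fsum n (fun i => ln C - (nu+1)/2*ln (1 + (/s * y i)^2/nu))) s
                    (fsum n (fun i => (nu+1)*(y i)^2/(s*(nu*s^2+(y i)^2))))).
      { apply (is_derive_fsum n (fun i s => ln C - (nu+1)/2*ln (1 + (/s * y i)^2/nu))).
        intros i _. apply dterm2; lra. }
      exact (is_derive_plus _ _ _ _ _ H1 H2). }
    assert (HD0: D shat = 0).
    { apply is_derive_unique in Hd. rewrite (Derive_ext _ F) in Hd by exact E.
      rewrite (is_derive_unique _ _ _ (HD shat Hh)) in Hd. exact Hd. }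
    set (T := shat^2).
    assert (HT: 0 < T) by (apply pow_lt; lra).
    assert (Hstat: fsum n (fun i => (nu+1)*((y i)^2/(nu*T+(y i)^2))) = INR n).
    { unfold D in HD0.
      rewrite (fsum_ext _ _ (fun i => /shat * ((nu+1)*((y i)^2/(nu*T+(y i)^2))))) in HD0.
      rewrite fsum_scal in HD0.
      apply (Rmult_eq_compat_l shat) in HD0. 
      replace (shat * (- INR n / shat + / shat * fsum n (fun i : nat => (nu + 1) * (y i ^ 2 / (nu * T + y i ^ 2)))))
       with (- INR n + fsum n (fun i : nat => (nu + 1) * (y i ^ 2 / (nu * T + y i ^ 2)))) in HD0 by (field; lra).
      lra.
      intros i _. assert (0 <= y i ^2) by apply pow2_ge_0.
      assert (0 < nu*T) by (apply Rmult_lt_0_compat; lra).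
      unfold T. unfold T in H0. field. split; lra. }
    split.
    + intros s Hs. rewrite !E. unfold F.
      assert (fsum n (fun i => ln C - (nu + 1) / 2 * ln (1 + (/ s * y i) ^ 2 / nu))
            - fsum n (fun i => ln C - (nu + 1) / 2 * ln (1 + (/ shat * y i) ^ 2 / nu))
            <= fsum n (fun i => (ln s - ln shat) * ((nu+1)*((y i)^2/(nu*T+(y i)^2))))).
      { rewrite <- fsum_minus. apply fsum_le. intros i _.
        pose proof (term_bound nu (y i) s shat Hnu Hs Hh). fold T in H. nra. }
      rewrite fsum_scal, Hstat in H. nra.
    + rewrite (Derive_ext (Derive (loglik nu n w)) (Derive F)) by (intros t; apply Derive_ext; exact E).
      assert (Hloc: Derive (Derive F) shat = Derive D shat).
      { apply Derive_ext_loc. exists (mkposreal shat Hh). intros t Ht.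
        unfold ball in Ht; simpl in Ht. unfold AbsRing_ball, abs, minus, plus, opp in Ht; simpl in Ht.
        apply Rabs_lt_between in Ht.
        apply is_derive_unique. apply HD. lra. }
      rewrite Hloc.
      assert (HD2: is_derive D shat (INR n / shat^2 + fsum n (fun i => -(nu+1)*(y i)^2*(3*nu*shat^2+(y i)^2)/(shat*(nu*shat^2+(y i)^2))^2))).
      { unfold D.
        assert (H1: is_derive (fun s => -INR n / s) shat (INR n / shat^2)) by (auto_derive; [lra| field; lra]).
        assert (H2 := is_derive_fsum n (fun i s => (nu+1)*(y i)^2/(s*(nu*s^2+(y i)^2))) _ shat (fun i _ => dterm3 nu (y i) shat Hnu Hh)).
        exact (is_derive_plus _ _ _ _ _ H1 H2). }
      rewrite (is_derive_unique _ _ _ HD2). fold T.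
      rewrite <- Hstat. unfold Rdiv at 1. rewrite Rmult_comm, <- fsum_scal, <- fsum_plus.
      apply fsum_neg.
      * intros i _. unfold T. rewrite key_eq by (try apply pow2_ge_0; lra).
        apply key_le; [lra|apply pow2_ge_0|lra].
      * destruct (classic (exists i, (i < n)%nat /\ y i <> 0)) as [[i [Hi Hy]]|Hno].
        -- exists i. split; auto. unfold T. rewrite key_eq by (try apply pow2_ge_0; lra).
           apply key_lt; [lra| |lra]. assert (0 < y i ^ 2) by (apply pow2_gt_0; auto). lra.
        -- exfalso. rewrite (fsum_ext _ _ (fun _ => 0)) in Hstat. rewrite fsum_zero in Hstat. lra.
           intros i Hi. assert (y i = 0) by (apply NNPP; intro; apply Hno; exists i; auto).
           rewrite H. field. assert (0 < nu*T) by (apply Rmult_lt_0_compat; lra). simpl. lra.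
Qed.
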